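(* Let $V$ be a complex normed vector space and $A\subseteq V$ convex. Then $A$ is norm closed if and only if $A$ is s.a.-sequentially closed. In particular, a linear subspace of $V$ is norm closed if and only if it is s.a.-sequentially closed.
   Context: $l^{\infty}(V)$ is the space of bounded sequences $x=\{x_n\}_{n=1}^\infty$ in $V$ with norm $\|x\|_\infty=\sup_n\|x_n\|_V$. For $v\in V$, $\widetilde v=\{v,v,\dots\}$. $T$ is the left shift: $T\{x_1,x_2,\dots\}=\{x_2,x_3,\dots\}$. A Banach limit functional is a bounded linear functional $L$ on $l^\infty(V)$ with $\|L\|\le1$ and $L(Tx)=L(x)$ for all $x$. A sequence $x\in l^\infty(V)$ is strongly almost convergent to $v\in V$ if $L(x)=L(\widetilde v)$ for every Banach limit functional $L$. A set $A\subseteq V$ is s.a.-sequentially closed if whenever $\{x_n\}_{n=1}^\infty$ is a bounded sequence in $A$ that is strongly almost convergent to some $v\in V$, then $v\in A$. *)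

(* Defs.v *)
From Stdlib Require Import Reals.
Open Scope R_scope.

Record C : Type := mkC { Re : R ; Im : R }.

Definition C0 : C := mkC 0 0.
Definition C1 : C := mkC 1 0.
Definition RtoC (r : R) : C := mkC r 0.
Definition Cadd (z w : C) : C := mkC (Re z + Re w) (Im z + Im w).
Definition Cmul (z w : C) : C :=
  mkC (Re z * Re w - Im z * Im w) (Re z * Im w + Im z * Re w).
Definition Cmod (z : C) : R := sqrt (Re z * Re z + Im z * Im z).

Record CNormedSpace : Type := {
  vec :> Type ;
  vadd : vec -> vec -> vec ;
  vzero : vec ;
  vopp : vec -> vec ;
  vscal : C -> vec -> vec ;
  vnorm : vec -> R ;
  vadd_assoc : forall x y z, vadd x (vadd y z) = vadd (vadd x y) z ;
  vadd_comm : forall x y, vadd x y = vadd y x ;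
  vadd_0 : forall x, vadd x vzero = x ;
  vadd_opp : forall x, vadd x (vopp x) = vzero ;
  vscal_assoc : forall a b x, vscal a (vscal b x) = vscal (Cmul a b) x ;
  vscal_1 : forall x, vscal C1 x = x ;
  vscal_distr_v : forall a x y, vscal a (vadd x y) = vadd (vscal a x) (vscal a y) ;
  vscal_distr_c : forall a b x, vscal (Cadd a b) x = vadd (vscal a x) (vscal b x) ;
  vnorm_eq0 : forall x, vnorm x = 0 -> x = vzero ;
  vnorm_scal : forall a x, vnorm (vscal a x) = Cmod a * vnorm x ;
  vnorm_triangle : forall x y, vnorm (vadd x y) <= vnorm x + vnorm y
}.

Arguments vadd {_}. Arguments vzero {_}. Arguments vopp {_}.
Arguments vscal {_}. Arguments vnorm {_}.

Section Defs.
Variable V : CNormedSpace.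

Definition vdist (x y : V) : R := vnorm (vadd x (vopp y)).

Definition convex (A : V -> Prop) : Prop :=
  forall x y t, A x -> A y -> 0 <= t <= 1 ->
    A (vadd (vscal (RtoC t) x) (vscal (RtoC (1 - t)) y)).

Definition linear_subspace (A : V -> Prop) : Prop :=
  A vzero /\ (forall x y, A x -> A y -> A (vadd x y)) /\
  (forall a x, A x -> A (vscal a x)).

Definition norm_closed (A : V -> Prop) : Prop :=
  forall v, ~ A v -> exists eps, 0 < eps /\ forall w, vdist w v < eps -> ~ A w.

Definition bounded_seq (x : nat -> V) : Prop :=
  exists M, forall n, vnorm (x n) <= M.

Definition const_seq (v : V) : nat -> V := fun _ => v.

Definition shift (x : nat -> V) : nat -> V := fun n => x (S n).

(* Banach limit functional: a (complex-)linear functional on l^infty(V) with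
   norm <= 1 (|L x| <= ||x||_infty, i.e. <= every bound of the sequence of norms)
   and shift invariant. Only its values on bounded sequences are constrained. *)
Definition banach_limit (L : (nat -> V) -> C) : Prop :=
  (forall x y, bounded_seq x -> bounded_seq y ->
     L (fun n => vadd (x n) (y n)) = Cadd (L x) (L y)) /\
  (forall a x, bounded_seq x -> L (fun n => vscal a (x n)) = Cmul a (L x)) /\
  (forall x M, bounded_seq x -> (forall n, vnorm (x n) <= M) -> Cmod (L x) <= M) /\
  (forall x, bounded_seq x -> L (shift x) = L x).

Definition strongly_almost_convergent (x : nat -> V) (v : V) : Prop :=
  forall L, banach_limit L -> L x = L (const_seq v).

Definition sa_seq_closed (A : V -> Prop) : Prop :=
  forall (x : nat -> V) (v : V), bounded_seq x -> (forall n, A (x n)) ->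
    strongly_almost_convergent x v -> A v.

End Defs.

Arguments convex {_}. Arguments linear_subspace {_}. Arguments norm_closed {_}.
Arguments bounded_seq {_}. Arguments sa_seq_closed {_}.
Arguments strongly_almost_convergent {_}. Arguments banach_limit {_}.

(* Main.v *)
Require Import Defs.
From Stdlib Require Import Reals.
From Stdlib Require Import Lra Lia Classical ClassicalEpsilon FunctionalExtensionality PropExtensionality ProofIrrelevance.
Open Scope R_scope.


Section Zorn.
Variable T : Type.
Variable le : T -> T -> Prop.

Definition chain (C : T -> Prop) := forall x y, C x -> C y -> le x y \/ le y x.
Definition Sub (C D : T -> Prop) := forall x, C x -> D x.

Lemma Sub_refl C : Sub C C. Proof. intros x H; exact H. Qed.
Lemma Sub_trans C D E : Sub C D -> Sub D E -> Sub C E.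
Proof. intros H1 H2 x H; auto. Qed.
Lemma Sub_ext C D : Sub C D -> Sub D C -> C = D.
Proof. intros H1 H2; apply functional_extensionality; intro x;
  apply propositional_extensionality; split; auto. Qed.

Definition gext (C : T -> Prop) : T -> Prop :=
  fun z => C z \/ (exists H : (exists y, ~ C y /\ chain (fun w => C w \/ w = y)),
     z = proj1_sig (constructive_indefinite_description _ H)).

Lemma gext_Sub C : Sub C (gext C). Proof. intros x H; left; exact H. Qed.

Definition Union (F : (T -> Prop) -> Prop) : T -> Prop := fun z => exists C, F C /\ C z.
Definition fchain (F : (T -> Prop) -> Prop) := forall C D, F C -> F D -> Sub C D \/ Sub D C.

Definition closedP (P : (T -> Prop) -> Prop) :=
  (forall C, P C -> P (gext C)) /\
  (forall F, (forall C, F C -> P C) -> fchain F -> P (Union F)).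

Definition M (C : T -> Prop) := forall P, closedP P -> P C.

Lemma M_closed : closedP M.
Proof.
  split.
  - intros C HC P HP. apply (proj1 HP). apply HC; exact HP.
  - intros F HF Hc P HP. apply (proj2 HP); auto. intros C HC; apply HF; auto.
Qed.

Lemma Union_ub F C : F C -> Sub C (Union F).
Proof. intros H x Hx; exists C; auto. Qed.

Definition ext c := M c /\ forall x, M x -> Sub x c -> x <> c -> Sub (gext x) c.

Lemma lemma1 c : ext c -> forall x, M x -> Sub x c \/ Sub (gext c) x.
Proof.
  intros [Mc Ec].
  set (Q := fun x => M x /\ (Sub x c \/ Sub (gext c) x)).
  assert (HQ : closedP Q).
  { split.
    - intros x [Mx Hx]. split. apply (proj1 M_closed); auto.
      destruct Hx as [Hx|Hx].
      + destruct (classic (x = c)) as [E|E].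
        * subst x. right. apply Sub_refl.
        * left. apply Ec; auto.
      + right. eapply Sub_trans. exact Hx. apply gext_Sub.
    - intros F HF Hc. split.
      + apply (proj2 M_closed); auto. intros C HC; apply HF; auto.
      + destruct (classic (forall x, F x -> Sub x c)) as [H|H].
        * left. intros z [C [HC Hz]]. apply (H C); auto.
        * apply not_all_ex_not in H. destruct H as [x Hx].
          apply imply_to_and in Hx. destruct Hx as [Fx Nx].
          destruct (HF x Fx) as [_ [Hx|Hx]]. contradiction.
          right. eapply Sub_trans. exact Hx. apply Union_ub; auto. }
  intros x Mx. apply (Mx Q HQ).
Qed.

Lemma ext_closed : closedP ext.
Proof.
  split.
  - intros c Hc. pose proof (lemma1 c Hc) as L1. destruct Hc as [Mc Ec]. split.
    + apply (proj1 M_closed); auto.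
    + intros x Mx Sx Nx. destruct (L1 x Mx) as [H|H].
      * destruct (classic (x = c)) as [E|E].
        -- subst x. apply Sub_refl.
        -- eapply Sub_trans. apply Ec; auto. apply gext_Sub.
      * exfalso. apply Nx. apply Sub_ext; auto.
  - intros F HF Hc. assert (Ms : M (Union F)).
    { apply (proj2 M_closed); auto. intros C HC; apply HF; auto. }
    split; auto. intros x Mx Sx Nx.
    destruct (classic (forall c, F c -> Sub (gext c) x)) as [H|H].
    + exfalso. apply Nx. apply Sub_ext; [exact Sx|].
      intros z [C [HC Hz]]. apply (H C HC). left; auto.
    + apply not_all_ex_not in H. destruct H as [c Hc'].
      apply imply_to_and in Hc'. destruct Hc' as [Fc Nc].
      pose proof (HF c Fc) as Ec. pose proof (lemma1 c Ec) as L1.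
      destruct (L1 x Mx) as [H|H]; [|contradiction].
      destruct (classic (x = c)) as [E|E].
      * subst x. destruct (L1 (Union F) Ms) as [H2|H2].
        -- exfalso. apply Nx. apply Sub_ext; [exact Sx|exact H2].
        -- exact H2.
      * eapply Sub_trans. apply (proj2 Ec); auto. apply Union_ub; auto.
Qed.

Lemma M_fchain : fchain M.
Proof.
  intros x c Mx Mc. assert (Ec : ext c) by (apply Mc; apply ext_closed).
  destruct (lemma1 c Ec x Mx) as [H|H]; auto.
  right. eapply Sub_trans. apply gext_Sub. exact H.
Qed.

Lemma chain_closed : closedP chain.
Proof.
  split.
  - intros C HC x y Hx Hy.
    destruct Hx as [Hx|[H1 E1]]; destruct Hy as [Hy|[H2 E2]].
    + auto.
    + pose proof (proj2_sig (constructive_indefinite_description _ H2)) as [_ Hch].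
      simpl in Hch. rewrite <- E2 in Hch. apply Hch; auto.
    + pose proof (proj2_sig (constructive_indefinite_description _ H1)) as [_ Hch].
      simpl in Hch. rewrite <- E1 in Hch. apply Hch; auto.
    + rewrite (proof_irrelevance _ H1 H2) in E1. rewrite E1, E2.
      pose proof (proj2_sig (constructive_indefinite_description _ H2)) as [_ Hch].
      simpl in Hch. apply Hch; auto.
  - intros F HF Hc x y [C [HC Hx]] [D [HD Hy]].
    destruct (Hc C D HC HD) as [S|S].
    + apply (HF D HD); auto.
    + apply (HF C HC); auto.
Qed.

Lemma max_chain : exists U, chain U /\ forall y, chain (fun w => U w \/ w = y) -> U y.
Proof.
  set (U := Union M).
  assert (MU : M U) by (apply (proj2 M_closed); auto; apply M_fchain).
  exists U. split.
  - apply MU; apply chain_closed.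
  - intros y Hy. apply NNPP; intro Ny.
    assert (MgU : M (gext U)) by (apply (proj1 M_closed); auto).
    assert (HS : Sub (gext U) U) by (apply Union_ub; auto).
    assert (Hex : exists y, ~ U y /\ chain (fun w => U w \/ w = y)) by (exists y; auto).
    pose proof (proj2_sig (constructive_indefinite_description _ Hex)) as [Hn _].
    apply Hn. apply HS. right. exists Hex. reflexivity.
Qed.

Theorem zorn : (forall x, le x x) -> (forall x y z, le x y -> le y z -> le x z) ->
  (forall C, chain C -> exists u, forall x, C x -> le x u) ->
  exists m, forall y, le m y -> le y m.
Proof.
  intros Hr Ht Hub. destruct max_chain as [U [HU Hmax]].
  destruct (Hub U HU) as [m Hm]. exists m. intros y Hy.
  apply Hm. apply Hmax. intros a b Ha Hb.
  destruct Ha as [Ha|Ha]; destruct Hb as [Hb|Hb]; subst.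
  - auto.
  - left. eapply Ht; eauto.
  - right. eapply Ht; eauto.
  - left; auto.
Qed.
End Zorn.

Section HB.
Variable X : Type.
Variable add : X -> X -> X.
Variable sc : R -> X -> X.
Variable zero : X.
Hypothesis add_assoc : forall x y z, add x (add y z) = add (add x y) z.
Hypothesis add_comm : forall x y, add x y = add y x.
Hypothesis add_0 : forall x, add x zero = x.
Hypothesis sc_assoc : forall a b x, sc a (sc b x) = sc (a * b) x.
Hypothesis sc_1 : forall x, sc 1 x = x.
Hypothesis sc_distr_v : forall a x y, sc a (add x y) = add (sc a x) (sc a y).
Hypothesis sc_distr_c : forall a b x, sc (a + b) x = add (sc a x) (sc b x).
Hypothesis sc_0 : forall x, sc 0 x = zero.
Variable S : X -> Prop.
Hypothesis S_add : forall x y, S x -> S y -> S (add x y).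
Hypothesis S_sc : forall t x, S x -> S (sc t x).
Variable p : X -> R.
Hypothesis p_add : forall x y, S x -> S y -> p (add x y) <= p x + p y.
Hypothesis p_sc : forall t x, 0 <= t -> S x -> p (sc t x) = t * p x.
Variable z0 : X.
Hypothesis Sz0 : S z0.

Lemma S_zero : S zero. Proof. rewrite <- (sc_0 z0). auto. Qed.
Lemma add_0l x : add zero x = x. Proof. rewrite add_comm; auto. Qed.
Lemma neg_r x : add x (sc (-1) x) = zero.
Proof. rewrite <- (sc_1 x) at 1. rewrite <- sc_distr_c. replace (1 + -1) with 0 by ring. auto. Qed.
Lemma neg_l x : add (sc (-1) x) x = zero.
Proof. rewrite add_comm; apply neg_r. Qed.
Lemma sc_zero t : sc t zero = zero.
Proof. rewrite <- (sc_0 zero). rewrite sc_assoc. replace (t*0) with 0 by ring. auto. Qed.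
Lemma p_zero : p zero = 0.
Proof. rewrite <- (sc_0 zero). rewrite p_sc; [ring|lra|apply S_zero]. Qed.

Record good (G : X -> R -> Prop) : Prop := {
  gsub : forall x a, G x a -> S x;
  gadd : forall x y a b, G x a -> G y b -> G (add x y) (a + b);
  gsc : forall t x a, G x a -> G (sc t x) (t * a);
  gker : forall a, G zero a -> a = 0;
  gdom : forall x a, G x a -> a <= p x;
  gz0 : G z0 (p z0)
}.

Lemma gfun G : good G -> forall x a b, G x a -> G x b -> a = b.
Proof.
  intros HG x a b Ha Hb. pose proof (gadd _ HG _ _ _ _ Ha (gsc _ HG (-1) _ _ Hb)) as H.
  rewrite neg_r in H. apply (gker _ HG) in H. lra.
Qed.

Lemma gzero G : good G -> G zero 0.
Proof. intros HG. pose proof (gsc _ HG 0 _ _ (gz0 _ HG)). rewrite sc_0 in H.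
  replace 0 with (0 * p z0) by ring. auto. Qed.

Definition G0 (x : X) (a : R) := exists t, x = sc t z0 /\ a = t * p z0.

Lemma G0_sub G : good G -> forall x a, G0 x a -> G x a.
Proof. intros HG x a [t [-> ->]]. apply gsc; auto. apply gz0; auto. Qed.

Lemma p_pos_nonneg : 0 <= p z0 + p (sc (-1) z0).
Proof. rewrite <- p_zero. rewrite <- (neg_r z0). apply p_add; auto. Qed.

Lemma G0_good : good G0.
Proof.
  split.
  - intros x a [t [-> _]]; auto.
  - intros x y a b [t [-> ->]] [s [-> ->]]. exists (t + s). split.
    rewrite sc_distr_c; auto. ring.
  - intros t x a [s [-> ->]]. exists (t * s). split. rewrite sc_assoc; auto. ring.
  - intros a [t [E ->]]. destruct (Req_dec t 0) as [->|Ht]. ring.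
    assert (z0 = zero). { rewrite <- (sc_1 z0). replace 1 with (/t * t) by (field; auto).
      rewrite <- sc_assoc. rewrite <- E. apply sc_zero. }
    rewrite H, p_zero. ring.
  - intros x a [t [-> ->]]. destruct (Rle_dec 0 t) as [Ht|Ht].
    + rewrite p_sc; auto. lra.
    + replace t with ((-t) * -1) by ring. rewrite <- sc_assoc. rewrite p_sc; [|lra|auto].
      pose proof p_pos_nonneg. nra.
  - exists 1. split. rewrite sc_1; auto. ring.
Qed.

Definition T := { G : X -> R -> Prop | good G }.
Definition leT (A B : T) := forall x a, proj1_sig A x a -> proj1_sig B x a.

Definition ubG (C : T -> Prop) (x : X) (a : R) :=
  G0 x a \/ exists A, C A /\ proj1_sig A x a.

Lemma ubG_good C : chain T leT C -> good (ubG C).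
Proof.
  intros Hc. pose proof G0_good as H0. split.
  - intros x a [H|[A [_ H]]]. eapply gsub; eauto. eapply gsub. apply (proj2_sig A). eauto.
  - intros x y a b Hx Hy. destruct Hx as [Hx|[A [CA Hx]]]; destruct Hy as [Hy|[B [CB Hy]]].
    + left. apply gadd; auto.
    + right. exists B. split; auto. apply gadd; auto. apply (proj2_sig B).
      apply G0_sub; auto. apply (proj2_sig B).
    + right. exists A. split; auto. apply gadd; auto. apply (proj2_sig A).
      apply G0_sub; auto. apply (proj2_sig A).
    + destruct (Hc A B CA CB) as [L|L].
      * right. exists B. split; auto. apply gadd; auto. apply (proj2_sig B).
      * right. exists A. split; auto. apply gadd; auto. apply (proj2_sig A).
  - intros t x a [H|[A [CA H]]]. left; apply gsc; auto. right; exists A; split; auto.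
    apply gsc; auto. apply (proj2_sig A).
  - intros a [H|[A [CA H]]]. eapply gker; eauto. eapply gker; [apply (proj2_sig A)|eauto].
  - intros x a [H|[A [CA H]]]. eapply gdom; eauto. eapply gdom; [apply (proj2_sig A)|eauto].
  - left. apply gz0; auto.
Qed.

Definition extG (G : X -> R -> Prop) (z : X) (c : R) (w : X) (a : R) :=
  exists x b t, G x b /\ w = add x (sc t z) /\ a = b + t * c.

Lemma ext_step G z : good G -> S z -> ~ (exists a, G z a) ->
  exists c, forall x b t, G x b -> b + t * c <= p (add x (sc t z)).
Proof.
  intros HG Sz Nz.
  set (E := fun r => exists y b, G y b /\ r = b - p (add y (sc (-1) z))).
  assert (Hb : forall x a, G x a -> forall r, E r -> r <= p (add x z) - a).
  { intros x a Hx r [y [b [Hy ->]]].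
    pose proof (gadd _ HG _ _ _ _ Hy Hx) as Hyx. apply (gdom _ HG) in Hyx.
    assert (Sx : S x) by (eapply gsub; eauto). assert (Sy : S y) by (eapply gsub; eauto).
    assert (add y x = add (add y (sc (-1) z)) (add x z)).
    { rewrite <- add_assoc. f_equal. rewrite (add_comm x z), add_assoc, neg_l, add_0l. auto. }
    rewrite H in Hyx. pose proof (p_add _ _ (S_add _ _ Sy (S_sc (-1) _ Sz)) (S_add _ _ Sx Sz)).
    lra. }
  assert (Hbd : bound E). { exists (p (add zero z) - 0). intros r Hr. apply (Hb zero 0); auto. apply gzero; auto. }
  assert (Hne : exists r, E r). { exists (0 - p (add zero (sc (-1) z))). exists zero, 0.
    split; auto. apply gzero; auto. }
  destruct (completeness E Hbd Hne) as [c [Hub Hlub]].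
  exists c. intros x b t Hx.
  assert (Sx : S x) by (eapply gsub; eauto).
  destruct (Rtotal_order t 0) as [Ht|[Ht|Ht]].
  - set (s := -t). assert (Hs : 0 < s) by (unfold s; lra).
    assert (E (b / s - p (add (sc (/s) x) (sc (-1) z)))).
    { exists (sc (/s) x), (b / s). split; auto. unfold Rdiv. rewrite Rmult_comm. apply gsc; auto. }
    apply Hub in H.
    assert (Heq : add x (sc t z) = sc s (add (sc (/s) x) (sc (-1) z))).
    { rewrite sc_distr_v, !sc_assoc. replace (s * / s) with 1 by (field; lra).
      replace (s * -1) with t by (unfold s; ring). rewrite sc_1; auto. }
    rewrite Heq, p_sc; [|lra|apply S_add; auto].
    replace t with (-s) by (unfold s; ring).
    assert (s * (b / s - p (add (sc (/ s) x) (sc (-1) z))) <= s * c) by (apply Rmult_le_compat_l; lra).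
    replace (s * (b / s - p (add (sc (/ s) x) (sc (-1) z)))) with (b - s * p (add (sc (/ s) x) (sc (-1) z))) in H0 by (field; lra).
    lra.
  - subst t. rewrite sc_0, add_0. pose proof (gdom _ HG _ _ Hx). lra.
  - assert (Hx' : G (sc (/t) x) (/t * b)) by (apply gsc; auto).
    assert (c <= p (add (sc (/t) x) z) - /t * b).
    { apply Hlub. intros r Hr. apply (Hb _ _ Hx' r Hr). }
    assert (Heq : add x (sc t z) = sc t (add (sc (/t) x) z)).
    { rewrite sc_distr_v, !sc_assoc. replace (t * / t) with 1 by (field; lra). rewrite sc_1; auto. }
    rewrite Heq, p_sc; [|lra|apply S_add; auto].
    assert (t * c <= t * (p (add (sc (/ t) x) z) - / t * b)) by (apply Rmult_le_compat_l; lra).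
    replace (t * (p (add (sc (/ t) x) z) - / t * b)) with (t * p (add (sc (/ t) x) z) - b) in H0 by (field; lra).
    lra.
Qed.

Lemma extG_good G z c : good G -> S z -> ~ (exists a, G z a) ->
  (forall x b t, G x b -> b + t * c <= p (add x (sc t z))) -> good (extG G z c).
Proof.
  intros HG Sz Nz Hc. split.
  - intros w a [x [b [t [Hx [-> _]]]]]. apply S_add; auto. eapply gsub; eauto.
  - intros w1 w2 a1 a2 [x [b [t [Hx [-> ->]]]]] [y [d [s [Hy [-> ->]]]]].
    exists (add x y), (b + d), (t + s). split. apply gadd; auto. split.
    + rewrite sc_distr_c. rewrite <- !add_assoc. f_equal. rewrite !add_assoc, (add_comm (sc t z) y); reflexivity.
    + ring.
  - intros r w a [x [b [t [Hx [-> ->]]]]]. exists (sc r x), (r * b), (r * t). split.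
    apply gsc; auto. split. rewrite sc_distr_v, sc_assoc; auto. ring.
  - intros a [x [b [t [Hx [E ->]]]]]. destruct (Req_dec t 0) as [->|Ht].
    + rewrite sc_0, add_0 in E. subst x. rewrite (gker _ HG _ Hx). ring.
    + exfalso. apply Nz. exists (/t * (-1 * b)).
      assert (sc t z = sc (-1) x).
      { transitivity (add (add (sc (-1) x) x) (sc t z)). rewrite neg_l, add_0l; auto.
        rewrite <- add_assoc, <- E, add_0; auto. }
      assert (z = sc (/t) (sc (-1) x)). { rewrite <- H, sc_assoc.
        replace (/t * t) with 1 by (field; auto). rewrite sc_1; auto. }
      rewrite H0. apply gsc, gsc; auto.
  - intros w a [x [b [t [Hx [-> ->]]]]]. apply Hc; auto.
  - exists z0, (p z0), 0. split. apply gz0; auto. split. rewrite sc_0, add_0; auto. ring.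
Qed.

Theorem hahn_banach : exists l : X -> R,
  (forall x y, S x -> S y -> l (add x y) = l x + l y) /\
  (forall t x, S x -> l (sc t x) = t * l x) /\
  (forall x, S x -> l x <= p x) /\ l z0 = p z0.
Proof.
  destruct (zorn T leT) as [m Hm].
  - intros x y a H; auto.
  - intros x y z H1 H2 u a H; auto.
  - intros C HC. exists (exist _ (ubG C) (ubG_good C HC)). intros A CA u a H.
    simpl. right. exists A; auto.
  - destruct m as [G HG]. unfold leT in Hm; simpl in Hm.
    assert (Hall : forall z, S z -> exists a, G z a).
    { intros z Sz. apply NNPP; intro Nz.
      destruct (ext_step G z HG Sz Nz) as [c Hc].
      pose proof (extG_good G z c HG Sz Nz Hc) as Hg.
      assert (Hle : forall x a, G x a -> extG G z c x a).
      { intros x a H. exists x, a, 0. split; auto. split. rewrite sc_0, add_0; auto. ring. }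
      pose proof (Hm (exist _ _ Hg) Hle) as H. simpl in H.
      apply Nz. exists c. apply H. exists zero, 0, 1. split. apply gzero; auto.
      split. rewrite sc_1, add_0l; auto. ring. }
    set (l := fun x => epsilon (inhabits 0) (fun a => G x a)).
    assert (Hl : forall x, S x -> G x (l x)).
    { intros x Sx. unfold l. apply epsilon_spec. auto. }
    exists l. split; [|split; [|split]].
    + intros x y Sx Sy. apply (gfun G HG (add x y)); [apply Hl; auto|apply gadd; auto].
    + intros t x Sx. apply (gfun G HG (sc t x)); [apply Hl; auto|apply gsc; auto].
    + intros x Sx. apply (gdom _ HG). auto.
    + apply (gfun G HG z0); [apply Hl; auto|apply gz0; auto].
Qed.
End HB.

Arguments vadd_assoc {_}. Arguments vadd_comm {_}. Arguments vadd_0 {_}. Arguments vadd_opp {_}.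
Arguments vscal_assoc {_}. Arguments vscal_1 {_}. Arguments vscal_distr_v {_}. Arguments vscal_distr_c {_}.
Arguments vnorm_eq0 {_}. Arguments vnorm_scal {_}. Arguments vnorm_triangle {_}.
Section VL.
Variable V : CNormedSpace.

Definition rs (t : R) (x : V) : V := vscal (RtoC t) x.

Lemma vadd_0l (x : V) : vadd vzero x = x.
Proof. rewrite vadd_comm. apply vadd_0. Qed.

Lemma vcancel (a x y : V) : vadd a x = vadd a y -> x = y.
Proof.
  intro H. assert (E : vadd (vopp a) (vadd a x) = vadd (vopp a) (vadd a y)) by (rewrite H; auto).
  rewrite !vadd_assoc in E. rewrite (vadd_comm (vopp a) a), vadd_opp, !vadd_0l in E. exact E.
Qed.

Lemma rs_assoc a b (x : V) : rs a (rs b x) = rs (a * b) x.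
Proof. unfold rs. rewrite vscal_assoc. f_equal. unfold Cmul, RtoC; simpl. f_equal; ring. Qed.
Lemma rs_1 (x : V) : rs 1 x = x. Proof. apply vscal_1. Qed.
Lemma rs_distr_v a (x y : V) : rs a (vadd x y) = vadd (rs a x) (rs a y).
Proof. apply vscal_distr_v. Qed.
Lemma rs_distr_c a b (x : V) : rs (a + b) x = vadd (rs a x) (rs b x).
Proof. unfold rs. rewrite <- vscal_distr_c. f_equal. unfold Cadd, RtoC; simpl. f_equal; ring. Qed.
Lemma rs_0 (x : V) : rs 0 x = vzero.
Proof.
  assert (H : vadd (rs 0 x) (rs 0 x) = vadd (rs 0 x) vzero).
  { rewrite <- rs_distr_c, vadd_0. f_equal. ring. }
  symmetry. eapply vcancel; eauto.
Qed.
Lemma rs_m1 (x : V) : rs (-1) x = vopp x.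
Proof.
  apply (vcancel x). rewrite vadd_opp. rewrite <- (rs_1 x) at 1. rewrite <- rs_distr_c.
  replace (1 + -1) with 0 by ring. apply rs_0.
Qed.
Lemma rs_zero t : rs t (@vzero V) = vzero.
Proof. rewrite <- (rs_0 vzero), rs_assoc. f_equal. ring. Qed.

Lemma Cmod_RtoC t : Cmod (RtoC t) = Rabs t.
Proof. unfold Cmod, RtoC; simpl. rewrite <- sqrt_Rsqr_abs. f_equal. unfold Rsqr. ring. Qed.

Lemma norm_rs t (x : V) : vnorm (rs t x) = Rabs t * vnorm x.
Proof. unfold rs. rewrite vnorm_scal, Cmod_RtoC. auto. Qed.

Lemma vnorm_zero : vnorm (@vzero V) = 0.
Proof. rewrite <- (rs_0 vzero), norm_rs, Rabs_R0. ring. Qed.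

Lemma vnorm_opp (x : V) : vnorm (vopp x) = vnorm x.
Proof. rewrite <- rs_m1, norm_rs. replace (Rabs (-1)) with 1. ring. unfold Rabs; destruct Rcase_abs; lra. Qed.

Lemma vnorm_nonneg (x : V) : 0 <= vnorm x.
Proof.
  pose proof (vnorm_triangle x (vopp x)). rewrite vadd_opp, vnorm_zero, vnorm_opp in H. lra.
Qed.

Lemma vnorm_sub_sym (x y : V) : vnorm (vadd x (vopp y)) = vnorm (vadd y (vopp x)).
Proof.
  rewrite <- vnorm_opp. f_equal. apply (vcancel (vadd x (vopp y))). rewrite vadd_opp.
  rewrite <- vadd_assoc, (vadd_assoc (vopp y) y), (vadd_comm (vopp y) y), vadd_opp, vadd_0l, vadd_opp. auto.
Qed.

Fixpoint vsum (f : nat -> V) (m : nat) : V :=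
  match m with O => vzero | S m' => vadd (vsum f m') (f m') end.

Lemma vsum_add f g m : vsum (fun j => vadd (f j) (g j)) m = vadd (vsum f m) (vsum g m).
Proof.
  induction m; cbn [vsum]. rewrite vadd_0; auto. rewrite IHm.
  rewrite <- !vadd_assoc. f_equal. rewrite !vadd_assoc. f_equal. apply vadd_comm.
Qed.

Lemma vsum_rs t f m : vsum (fun j => rs t (f j)) m = rs t (vsum f m).
Proof. induction m; cbn [vsum]. rewrite rs_zero; auto. rewrite IHm, rs_distr_v; auto. Qed.

Lemma vsum_const (v : V) m : vsum (fun _ => v) m = rs (INR m) v.
Proof. induction m; cbn [vsum]. rewrite rs_0; auto. rewrite IHm. rewrite S_INR, rs_distr_c, rs_1; auto. Qed.

Lemma vsum_norm f m B : (forall j, vnorm (f j) <= B) -> vnorm (vsum f m) <= INR m * B.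
Proof.
  intro H. induction m; cbn [vsum]. rewrite vnorm_zero; simpl; lra.
  rewrite S_INR. pose proof (vnorm_triangle (vsum f m) (f m)). pose proof (H m). lra.
Qed.

Lemma vsum_ext f g m : (forall j, f j = g j) -> vsum f m = vsum g m.
Proof. intro H. induction m; simpl; auto. rewrite IHm, H; auto. Qed.

Lemma vsum_tele (y : nat -> V) k m :
  vsum (fun j => vadd (y (k + j)%nat) (vopp (y (S (k + j))))) m = vadd (y k) (vopp (y (k + m)%nat)).
Proof.
  induction m; cbn [vsum].
  - rewrite Nat.add_0_r, vadd_opp; auto.
  - rewrite IHm. rewrite <- vadd_assoc. f_equal. rewrite vadd_assoc, (vadd_comm (vopp _)), vadd_opp, vadd_0l.
    f_equal. f_equal. lia.
Qed.

Lemma vsum_tele2 (y : nat -> V) k m :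
  vsum (fun j => vadd (y (S (k + j))) (vopp (y (k + j)%nat))) m = vadd (y (k + m)%nat) (vopp (y k)).
Proof.
  induction m; cbn [vsum].
  - rewrite Nat.add_0_r, vadd_opp; auto.
  - rewrite IHm. rewrite (vadd_comm (y (S (k + m)))). rewrite vadd_assoc.
    rewrite <- (vadd_assoc (y (k + m)%nat)), (vadd_comm (vopp (y k))), vadd_assoc, vadd_opp, vadd_0l.
    rewrite vadd_comm. f_equal. f_equal. lia.
Qed.

Lemma convex_avg (A : V -> Prop) (x : nat -> V) : convex A -> (forall j, A (x j)) ->
  forall m, (1 <= m)%nat -> A (rs (/ INR m) (vsum x m)).
Proof.
  intros HA Hx m Hm. induction m as [|m IH]. lia.
  destruct (Nat.eq_dec m 0) as [->|Hm0].
  - simpl. rewrite vadd_0l. replace (/ 1) with 1 by field. rewrite rs_1; auto.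
  - assert (Hpos : 0 < INR m) by (apply lt_0_INR; lia).
    specialize (IH ltac:(lia)). simpl vsum. rewrite S_INR.
    set (t := INR m / (INR m + 1)).
    assert (E : rs (/ (INR m + 1)) (vadd (vsum x m) (x m)) =
      vadd (rs t (rs (/ INR m) (vsum x m))) (rs (1 - t) (x m))).
    { rewrite rs_distr_v, rs_assoc. f_equal; f_equal; unfold t; field; lra. }
    rewrite E. apply HA; auto. unfold t. split.
    unfold Rdiv. apply Rmult_le_pos; [lra|]. left; apply Rinv_0_lt_compat; lra.
    apply Rmult_le_reg_r with (INR m + 1). lra.
    unfold Rdiv. rewrite Rmult_assoc, Rinv_l by lra. lra.
Qed.

End VL.

Definition Rsup (E : R -> Prop) : R := epsilon (inhabits 0) (fun s => is_lub E s).
Lemma Rsup_spec E : bound E -> (exists x, E x) -> is_lub E (Rsup E).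
Proof. intros H1 H2. unfold Rsup. apply epsilon_spec. destruct (completeness E H1 H2) as [m Hm]. exists m; auto. Qed.

Lemma eps_le a b : (forall eps, 0 < eps -> a <= b + eps) -> a <= b.
Proof. intro H. destruct (Rle_dec a b); auto. specialize (H ((a - b)/2)). lra. Qed.

Section Seq.
Variable V : CNormedSpace.
Definition X := nat -> V.
Definition sadd (y z : X) : X := fun n => vadd (y n) (z n).
Definition ssc (t : R) (y : X) : X := fun n => rs V t (y n).
Definition szero : X := fun _ => vzero.

Definition avgn (y : X) m k := vnorm (vsum V (fun j => y (k + j)%nat) m) / INR m.
Definition EN N y r := exists m k, (N <= m)%nat /\ (1 <= m)%nat /\ r = avgn y m k.
Definition q N y := Rsup (EN N y).
Definition pp (y : X) := - Rsup (fun r => exists N, r = - q N y).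

Lemma INR_pos m : (1 <= m)%nat -> 0 < INR m.
Proof. intro; apply lt_0_INR; lia. Qed.

Lemma avg_nonneg y m k : (1 <= m)%nat -> 0 <= avgn y m k.
Proof. intro H. unfold avgn, Rdiv. apply Rmult_le_pos. apply vnorm_nonneg.
  left; apply Rinv_0_lt_compat, INR_pos; auto. Qed.

Lemma avg_le y B m k : (forall n, vnorm (y n) <= B) -> (1 <= m)%nat -> avgn y m k <= B.
Proof.
  intros HB Hm. unfold avgn. pose proof (INR_pos m Hm).
  pose proof (vsum_norm V (fun j => y (k + j)%nat) m B (fun j => HB _)).
  apply Rmult_le_reg_r with (INR m); auto. unfold Rdiv. rewrite Rmult_assoc, Rinv_l by lra. lra.
Qed.

Section Bnd.
Variable y : X.
Variable B : R.
Hypothesis HB : forall n, vnorm (y n) <= B.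

Lemma EN_ne N : exists r, EN N y r.
Proof. exists (avgn y (Nat.max N 1) 0). exists (Nat.max N 1), 0%nat. repeat split; auto; lia. Qed.

Lemma q_spec N : is_lub (EN N y) (q N y).
Proof. apply Rsup_spec. exists B. intros r [m [k [_ [Hm ->]]]]. apply avg_le; auto. apply EN_ne. Qed.

Lemma q_ge N m k : (N <= m)%nat -> (1 <= m)%nat -> avgn y m k <= q N y.
Proof. intros. apply (proj1 (q_spec N)). exists m, k; auto. Qed.

Lemma q_le N c : (forall m k, (N <= m)%nat -> (1 <= m)%nat -> avgn y m k <= c) -> q N y <= c.
Proof. intro H. apply (proj2 (q_spec N)). intros r [m [k [H1 [H2 ->]]]]. auto. Qed.

Lemma q_nonneg N : 0 <= q N y.
Proof. eapply Rle_trans. apply (avg_nonneg y (Nat.max N 1) 0). lia. apply q_ge; lia. Qed.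

Lemma q_leB N : q N y <= B.
Proof. apply q_le. intros. apply avg_le; auto. Qed.

Lemma q_mono N1 N2 : (N1 <= N2)%nat -> q N2 y <= q N1 y.
Proof. intro H. apply q_le. intros. apply q_ge; auto; lia. Qed.

Lemma pp_spec : is_lub (fun r => exists N, r = - q N y) (- pp y).
Proof. unfold pp. rewrite Ropp_involutive. apply Rsup_spec.
  exists 0. intros r [N ->]. pose proof (q_nonneg N). lra. exists (- q 0 y). exists 0%nat; auto. Qed.

Lemma pp_le_q N : pp y <= q N y.
Proof. assert (- q N y <= - pp y). apply (proj1 pp_spec). exists N; auto. lra. Qed.

Lemma pp_ge c : (forall N, c <= q N y) -> c <= pp y.
Proof. intro H. assert (- pp y <= - c). apply (proj2 pp_spec). intros r [N ->]. specialize (H N). lra. lra. Qed.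

Lemma pp_approx eps : 0 < eps -> exists N, q N y < pp y + eps.
Proof.
  intro He. apply NNPP. intro Hn. assert (pp y + eps <= pp y). apply pp_ge. intro N.
  destruct (Rlt_dec (q N y) (pp y + eps)). exfalso; apply Hn; exists N; auto. lra. lra.
Qed.

Lemma pp_nonneg : 0 <= pp y.
Proof. apply pp_ge. apply q_nonneg. Qed.

Lemma pp_leB : pp y <= B.
Proof. eapply Rle_trans. apply (pp_le_q 0). apply q_leB. Qed.

End Bnd.

Lemma bounded_add (y z : X) : bounded_seq y -> bounded_seq z -> bounded_seq (sadd y z).
Proof. intros [B1 H1] [B2 H2]. exists (B1 + B2). intro n. unfold sadd.
  pose proof (vnorm_triangle (y n) (z n)). pose proof (H1 n). pose proof (H2 n). lra. Qed.

Lemma bounded_sc t (y : X) : bounded_seq y -> bounded_seq (ssc t y).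
Proof. intros [B H]. exists (Rabs t * B). intro n. unfold ssc. rewrite norm_rs.
  apply Rmult_le_compat_l. apply Rabs_pos. auto. Qed.

Lemma pp_add y z : bounded_seq y -> bounded_seq z -> pp (sadd y z) <= pp y + pp z.
Proof.
  intros Hy Hz. pose proof (bounded_add y z Hy Hz) as [C HC].
  destruct Hy as [B1 H1]. destruct Hz as [B2 H2].
  assert (Hq : forall N, q N (sadd y z) <= q N y + q N z).
  { intro N. apply (q_le _ C HC). intros m k Hm H1m.
    apply Rle_trans with (avgn y m k + avgn z m k).
    - unfold avgn, sadd. rewrite (vsum_add V (fun j => y (k + j)%nat) (fun j => z (k + j)%nat)).
      pose proof (INR_pos m H1m). unfold Rdiv. rewrite <- Rmult_plus_distr_r.
      apply Rmult_le_compat_r. left; apply Rinv_0_lt_compat; auto. apply vnorm_triangle.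
    - pose proof (q_ge y B1 H1 N m k Hm H1m). pose proof (q_ge z B2 H2 N m k Hm H1m). lra. }
  apply eps_le. intros eps He.
  destruct (pp_approx y B1 H1 (eps/2)) as [N1 HN1]; [lra|].
  destruct (pp_approx z B2 H2 (eps/2)) as [N2 HN2]; [lra|].
  pose proof (pp_le_q _ C HC (Nat.max N1 N2)). pose proof (Hq (Nat.max N1 N2)).
  pose proof (q_mono y B1 H1 N1 (Nat.max N1 N2) ltac:(lia)).
  pose proof (q_mono z B2 H2 N2 (Nat.max N1 N2) ltac:(lia)). lra.
Qed.

Lemma avg_sc t y m k : 0 <= t -> avgn (ssc t y) m k = t * avgn y m k.
Proof. intro Ht. unfold avgn, ssc. rewrite vsum_rs, norm_rs, Rabs_pos_eq by auto. unfold Rdiv; ring. Qed.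

Lemma pp_sc t y : 0 <= t -> bounded_seq y -> pp (ssc t y) = t * pp y.
Proof.
  intros Ht Hy. pose proof (bounded_sc t y Hy) as [C HC]. destruct Hy as [B HB].
  assert (Hq : forall N, q N (ssc t y) = t * q N y).
  { intro N. apply Rle_antisym.
    - apply (q_le _ C HC). intros m k Hm H1m. rewrite avg_sc by auto.
      apply Rmult_le_compat_l; auto. apply (q_ge _ B HB); auto.
    - destruct (Req_dec t 0) as [->|Hn]. rewrite Rmult_0_l. apply (q_nonneg _ C HC).
      assert (q N y <= q N (ssc t y) / t).
      { apply (q_le _ B HB). intros m k Hm H1m. pose proof (q_ge _ C HC N m k Hm H1m).
        rewrite avg_sc in H by auto. apply Rmult_le_reg_l with t. lra.
        unfold Rdiv. rewrite <- Rmult_assoc, (Rmult_comm t (q N (ssc t y))), Rmult_assoc, Rinv_r by auto. lra. }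
      apply Rmult_le_compat_l with (r := t) in H; [|lra].
      unfold Rdiv in H. rewrite (Rmult_comm (q N (ssc t y))), <- Rmult_assoc, Rinv_r, Rmult_1_l in H by auto. lra. }
  apply Rle_antisym.
  - destruct (Req_dec t 0) as [->|Hn].
    + pose proof (pp_le_q _ C HC 0). rewrite Hq in H. lra.
    + apply eps_le. intros eps He. destruct (pp_approx y B HB (eps / t)) as [N HN].
      apply Rdiv_lt_0_compat; lra.
      pose proof (pp_le_q _ C HC N). rewrite Hq in H.
      apply Rmult_lt_compat_l with (r := t) in HN; [|lra].
      replace (t * (pp y + eps / t)) with (t * pp y + eps) in HN by (field; auto). lra.
  - apply (pp_ge _ C HC). intro N. rewrite Hq. apply Rmult_le_compat_l; auto. apply (pp_le_q _ B HB).
Qed.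

Lemma pp_small w : bounded_seq w -> forall C, 0 <= C ->
  (forall m k, (1 <= m)%nat -> vnorm (vsum V (fun j => w (k + j)%nat) m) <= C) -> pp w <= 0.
Proof.
  intros [B HB] C HC H. destruct (Rle_dec (pp w) 0) as [|Hp]; auto. exfalso.
  assert (Hpos : 0 < pp w) by lra.
  destruct (INR_archimed (pp w) C Hpos) as [N HN].
  destruct N as [|N']. simpl in HN. lra.
  assert (Hq : q (S N') w <= C / INR (S N')).
  { apply (q_le _ B HB). intros m k Hm H1m. unfold avgn.
    pose proof (INR_pos m H1m). pose proof (H m k H1m).
    assert (INR (S N') <= INR m) by (apply le_INR; auto).
    apply Rle_trans with (C / INR m). unfold Rdiv. apply Rmult_le_compat_r; auto.
    left; apply Rinv_0_lt_compat; auto.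
    unfold Rdiv. apply Rmult_le_compat_l; auto. apply Rinv_le_contravar; auto. apply INR_pos; lia. }
  pose proof (pp_le_q _ B HB (S N')).
  assert (pp w * INR (S N') <= C).
  { pose proof (INR_pos (S N') ltac:(lia)).
    apply Rle_trans with (C / INR (S N') * INR (S N')). apply Rmult_le_compat_r; lra.
    unfold Rdiv. rewrite Rmult_assoc, Rinv_l by lra. lra. }
  lra.
Qed.

Definition shiftX (y : X) : X := fun n => y (S n).

Lemma bnd_nonneg (y : X) B : (forall n, vnorm (y n) <= B) -> 0 <= B.
Proof. intro H. pose proof (H 0%nat). pose proof (vnorm_nonneg V (y 0%nat)). lra. Qed.

Lemma pp_shift1 y : bounded_seq y -> pp (sadd y (ssc (-1) (shiftX y))) <= 0.
Proof.
  intros Hy. assert (Hw : bounded_seq (sadd y (ssc (-1) (shiftX y)))).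
  { apply bounded_add; auto. apply bounded_sc. destruct Hy as [B HB]; exists B; intro; apply HB. }
  destruct Hy as [B HB]. apply (pp_small _ Hw (B + B)). pose proof (bnd_nonneg _ _ HB); lra.
  intros m k Hm. unfold sadd, ssc, shiftX.
  rewrite (vsum_ext V _ (fun j => vadd (y (k + j)%nat) (vopp (y (S (k + j)))))).
  rewrite vsum_tele. pose proof (vnorm_triangle (y k) (vopp (y (k + m)%nat))).
  rewrite vnorm_opp in H. pose proof (HB k). pose proof (HB (k + m)%nat). lra.
  intro j. rewrite rs_m1; auto.
Qed.

Lemma pp_shift2 y : bounded_seq y -> pp (sadd (shiftX y) (ssc (-1) y)) <= 0.
Proof.
  intros Hy. assert (Hw : bounded_seq (sadd (shiftX y) (ssc (-1) y))).
  { apply bounded_add; auto. destruct Hy as [B HB]; exists B; intro; apply HB. apply bounded_sc; auto. }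
  destruct Hy as [B HB]. apply (pp_small _ Hw (B + B)). pose proof (bnd_nonneg _ _ HB); lra.
  intros m k Hm. unfold sadd, ssc, shiftX.
  rewrite (vsum_ext V _ (fun j => vadd (y (S (k + j))) (vopp (y (k + j)%nat)))).
  rewrite vsum_tele2. pose proof (vnorm_triangle (y (k + m)%nat) (vopp (y k))).
  rewrite vnorm_opp in H. pose proof (HB k). pose proof (HB (k + m)%nat). lra.
  intro j. rewrite rs_m1; auto.
Qed.

Lemma pp_sep (A : V -> Prop) (v : V) (x : X) d : convex A -> (forall n, A (x n)) ->
  (forall a, A a -> d <= vnorm (vadd v (vopp a))) -> bounded_seq x ->
  d <= pp (fun n => vadd v (rs V (-1) (x n))).
Proof.
  intros HA Hx Hd [B HB].
  set (u := fun n => vadd v (rs V (-1) (x n))).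
  assert (Hu : forall n, vnorm (u n) <= vnorm v + B).
  { intro n. unfold u. cbv beta. rewrite rs_m1. pose proof (vnorm_triangle v (vopp (x n))). rewrite vnorm_opp in H.
    pose proof (HB n). lra. }
  apply (pp_ge _ _ Hu). intro N. set (m := Nat.max N 1).
  eapply Rle_trans; [|apply (q_ge _ _ Hu N m 0); lia].
  unfold avgn, u. simpl.
  rewrite (vsum_add V (fun _ => v) (fun j => rs V (-1) (x j))), vsum_const, vsum_rs.
  assert (Hm : 0 < INR m) by (apply INR_pos; lia).
  assert (E : vnorm (vadd (rs V (INR m) v) (rs V (-1) (vsum V x m))) / INR m =
    vnorm (rs V (/ INR m) (vadd (rs V (INR m) v) (rs V (-1) (vsum V x m))))).
  { rewrite norm_rs, Rabs_pos_eq. unfold Rdiv; ring. left; apply Rinv_0_lt_compat; auto. }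
  rewrite E, rs_distr_v, !rs_assoc. replace (/ INR m * INR m) with 1 by (field; lra).
  replace (/ INR m * -1) with (-1 * / INR m) by ring. rewrite <- rs_assoc, rs_1, rs_m1.
  apply Hd. apply convex_avg; auto. lia.
Qed.

End Seq.

Section Main.
Variable V : CNormedSpace.

Definition Ic : Defs.C := mkC 0 1.

Lemma vscal_decomp a b (w : V) : vscal (mkC a b) w = vadd (rs V a w) (rs V b (vscal Ic w)).
Proof.
  unfold rs. rewrite vscal_assoc, <- vscal_distr_c. f_equal. unfold Cadd, Cmul, RtoC, Ic; simpl.
  f_equal; ring.
Qed.

Lemma seq_ext (f g : nat -> V) : (forall n, f n = g n) -> f = g.
Proof. intro H; apply functional_extensionality; auto. Qed.

Lemma HB_seq (z0 : X V) : bounded_seq z0 -> exists l : X V -> R,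
  (forall x y, bounded_seq x -> bounded_seq y -> l (sadd V x y) = l x + l y) /\
  (forall t x, bounded_seq x -> l (ssc V t x) = t * l x) /\
  (forall x, bounded_seq x -> l x <= pp V x) /\ l z0 = pp V z0.
Proof.
  intro Hz. apply (hahn_banach (X V) (sadd V) (ssc V) (szero V)).
  - intros; apply seq_ext; intro; apply vadd_assoc.
  - intros; apply seq_ext; intro; apply vadd_comm.
  - intros; apply seq_ext; intro; apply vadd_0.
  - intros; apply seq_ext; intro; apply rs_assoc.
  - intros; apply seq_ext; intro; apply rs_1.
  - intros; apply seq_ext; intro; apply rs_distr_v.
  - intros; apply seq_ext; intro; apply rs_distr_c.
  - intros; apply seq_ext; intro; apply rs_0.
  - apply bounded_add.
  - apply bounded_sc.
  - apply pp_add.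
  - intros; apply pp_sc; auto.
  - exact Hz.
Qed.

Lemma bounded_cscal a (y : X V) : bounded_seq y -> bounded_seq (fun n => vscal a (y n)).
Proof. intros [B HB]. exists (Cmod a * B). intro n. rewrite vnorm_scal.
  apply Rmult_le_compat_l. unfold Cmod; apply sqrt_pos. auto. Qed.

Lemma exists_BL (z0 : X V) : bounded_seq z0 -> exists L, banach_limit L /\ Re (L z0) = pp V z0.
Proof.
  intro Hz. destruct (HB_seq z0 Hz) as [l [Hadd [Hsc [Hle Hz0]]]].
  set (iy := fun (y : X V) => fun n => vscal Ic (y n)).
  set (L := fun y => mkC (l y) (- l (iy y))).
  assert (Hcs : forall a b y, bounded_seq y -> l (fun n => vscal (mkC a b) (y n)) = a * l y + b * l (iy y)).
  { intros a b y Hy. replace (fun n => vscal (mkC a b) (y n)) with (sadd V (ssc V a y) (ssc V b (iy y))).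
    rewrite Hadd, !Hsc; auto. apply bounded_cscal; auto. apply bounded_sc; auto.
    apply bounded_sc, bounded_cscal; auto.
    apply seq_ext; intro n. unfold sadd, ssc, iy. rewrite vscal_decomp; auto. }
  assert (Hmul : forall a y, bounded_seq y -> L (fun n => vscal a (y n)) = Cmul a (L y)).
  { intros [a b] y Hy. unfold L, Cmul; simpl.
    assert (E : iy (fun n => vscal (mkC a b) (y n)) = fun n => vscal (mkC (-b) a) (y n)).
    { apply seq_ext; intro n. unfold iy. rewrite vscal_assoc. f_equal. unfold Cmul, Ic; simpl. f_equal; ring. }
    rewrite E, !Hcs; auto.
    assert (E2 : iy (iy y) = ssc V (-1) y).
    { apply seq_ext; intro n. unfold iy, ssc, rs. rewrite vscal_assoc. f_equal. unfold Cmul, Ic, RtoC; simpl. f_equal; ring. }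
    f_equal; ring. }
  exists L. split.
  - split; [|split; [|split]].
    + intros x y Hx Hy. unfold L, Cadd; simpl.
      change (fun n => vadd (x n) (y n)) with (sadd V x y). rewrite Hadd; auto.
      replace (iy (sadd V x y)) with (sadd V (iy x) (iy y)). rewrite Hadd.
      f_equal; ring. apply bounded_cscal; auto. apply bounded_cscal; auto.
      apply seq_ext; intro n. unfold iy, sadd. rewrite vscal_distr_v; auto.
    + intros a x Hx. apply Hmul; auto.
    + intros x M Hx HM. pose proof (bnd_nonneg V x M HM) as HM0.
      set (z := L x). set (s := Re z * Re z + Im z * Im z). set (r := sqrt s).
      assert (Hs : 0 <= s) by (unfold s; nra).
      assert (Hrr : r * r = s) by (apply sqrt_sqrt; auto).
      assert (Hr : Cmod z = r) by reflexivity. rewrite Hr.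
      destruct (Req_dec r 0) as [Hr0|Hr0]. lra.
      assert (Hrp : 0 < r) by (pose proof (sqrt_pos s); fold r in H; lra).
      set (a := mkC (Re z / r) (- Im z / r)).
      assert (Ha : Cmod a = 1).
      { unfold Cmod, a; cbn [Re Im]. replace (Re z / r * (Re z / r) + - Im z / r * (- Im z / r)) with (s / (r * r)).
        rewrite Hrr. replace (s / s) with 1 by (field; intro; apply Hr0; unfold r; rewrite H; apply sqrt_0).
        apply sqrt_1. unfold s; field; auto. }
      assert (H1 : Re (L (fun n => vscal a (x n))) = r).
      { rewrite Hmul; auto. fold z. unfold Cmul, a; cbn [Re Im].
        replace (Re z / r * Re z - - Im z / r * Im z) with (s / r) by (unfold s; field; auto).
        rewrite <- Hrr. field; auto. }
      unfold L in H1; simpl in H1. rewrite <- H1.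
      eapply Rle_trans. apply Hle. apply bounded_cscal; auto.
      apply (pp_leB V _ M). intro n. rewrite vnorm_scal, Ha. rewrite Rmult_1_l; auto.
    + intros x Hx. unfold L. 
      assert (Hsh : forall y, bounded_seq y -> l (shift V y) = l y).
      { intros y Hy. assert (Hsy : bounded_seq (shiftX V y)).
        { destruct Hy as [B HB]; exists B; intro; apply HB. }
        pose proof (pp_shift1 V y Hy). pose proof (pp_shift2 V y Hy).
        pose proof (Hle _ (bounded_add V _ _ Hy (bounded_sc V (-1) _ Hsy))).
        pose proof (Hle _ (bounded_add V _ _ Hsy (bounded_sc V (-1) _ Hy))).
        rewrite Hadd, Hsc in H1, H2; auto; try apply bounded_sc; auto.
        change (shift V y) with (shiftX V y). lra. }
      rewrite Hsh; auto. change (iy (shift V x)) with (shift V (iy x)).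
      rewrite Hsh; auto. apply bounded_cscal; auto.
  - unfold L; simpl. auto.
Qed.

End Main.

Section Final.
Variable V : CNormedSpace.

Lemma Cmod_eq0 (z : Defs.C) : Cmod z = 0 -> Re z = 0 /\ Im z = 0.
Proof.
  unfold Cmod. intro H. apply sqrt_eq_0 in H; [|nra]. split; nra.
Qed.

Lemma closed_to_sa (A : V -> Prop) : convex A -> norm_closed A -> sa_seq_closed A.
Proof.
  intros HA HC x v Hb Hx Hsac. apply NNPP; intro Nv.
  destruct (HC v Nv) as [eps [He Hball]].
  assert (Hd : forall a, A a -> eps <= vnorm (vadd v (vopp a))).
  { intros a Ha. destruct (Rle_dec eps (vnorm (vadd v (vopp a)))) as [|Hn]; auto.
    exfalso. apply (Hball a); auto. unfold vdist. rewrite vnorm_sub_sym. lra. }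
  pose proof (pp_sep V A v x eps HA Hx Hd Hb) as Hp.
  set (u := fun n => vadd v (rs V (-1) (x n))).
  assert (Hcb : bounded_seq (const_seq V v)).
  { exists (vnorm v). intro; unfold const_seq; lra. }
  assert (Hmb : bounded_seq (fun n => vscal (RtoC (-1)) (x n))) by (apply bounded_cscal; auto).
  assert (Hu : bounded_seq u) by (apply (bounded_add V (const_seq V v)); auto).
  destruct (exists_BL V u Hu) as [L [HL HLu]].
  pose proof (Hsac L HL) as E.
  destruct HL as [Ladd [Lmul _]].
  assert (E2 : L u = Cadd (L (const_seq V v)) (Cmul (RtoC (-1)) (L x))).
  { rewrite <- Lmul; auto. apply (Ladd (const_seq V v) (fun n => vscal (RtoC (-1)) (x n))); auto. }
  rewrite E2, E in HLu. unfold Cadd, Cmul, RtoC in HLu; cbn [Re Im] in HLu.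
  fold u in Hp. lra.
Qed.

Lemma sa_to_closed (A : V -> Prop) : sa_seq_closed A -> norm_closed A.
Proof.
  intros Hsa v Nv. apply NNPP; intro H.
  assert (Hall : forall eps, 0 < eps -> exists w, vdist V w v < eps /\ A w).
  { intros eps He. apply NNPP; intro Hn. apply H. exists eps. split; auto.
    intros w Hw Aw. apply Hn. exists w; auto. }
  assert (Hpos : forall n : nat, 0 < / (INR n + 1)).
  { intro n. apply Rinv_0_lt_compat. pose proof (pos_INR n). lra. }
  set (w := fun n => proj1_sig (constructive_indefinite_description _ (Hall _ (Hpos n)))).
  assert (Hw : forall n, vdist V (w n) v < / (INR n + 1) /\ A (w n)).
  { intro n. unfold w. apply (proj2_sig (constructive_indefinite_description _ (Hall _ (Hpos n)))). }
  assert (Hle1 : forall n, / (INR n + 1) <= 1).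
  { intro n. pose proof (pos_INR n). rewrite <- Rinv_1. apply Rinv_le_contravar; lra. }
  set (d := fun n => vadd (w n) (vopp v)).
  assert (Hdw : forall n, w n = vadd (d n) v).
  { intro n. unfold d. rewrite <- vadd_assoc, (vadd_comm (vopp v) v), vadd_opp, vadd_0. auto. }
  assert (Hdb : bounded_seq d).
  { exists 1. intro n. pose proof (proj1 (Hw n)). pose proof (Hle1 n). unfold vdist in H0. unfold d. lra. }
  assert (Hwb : bounded_seq w).
  { exists (1 + vnorm v). intro n. rewrite Hdw. pose proof (vnorm_triangle (d n) v).
    pose proof (proj1 (Hw n)). pose proof (Hle1 n). unfold vdist in H1. unfold d in *. lra. }
  apply Nv. apply (Hsa w v Hwb (fun n => proj2 (Hw n))).
  intros L HL. destruct HL as [Ladd [Lmul [Lbd Lsh]]].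
  assert (Hk : forall k, L d = L (fun n => d (n + k)%nat)).
  { induction k. f_equal. apply seq_ext; intro; f_equal; lia.
    rewrite IHk. rewrite <- Lsh. f_equal. unfold shift. apply seq_ext; intro; f_equal; lia.
    destruct Hdb as [B HB]. exists B; auto. }
  assert (Hz : Cmod (L d) = 0).
  { apply Rle_antisym.
    - apply Rnot_lt_le. intro Hc.
      destruct (INR_archimed (Cmod (L d)) 1 Hc) as [k Hk'].
      assert (Cmod (L d) <= / (INR k + 1)).
      { rewrite (Hk k). apply Lbd. destruct Hdb as [B HB]; exists B; auto.
        intro n. pose proof (proj1 (Hw (n + k)%nat)). unfold vdist in H0. unfold d.
        assert (/ (INR (n + k) + 1) <= / (INR k + 1)).
        { apply Rinv_le_contravar. pose proof (pos_INR k); lra. rewrite plus_INR. pose proof (pos_INR n). lra. }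
        lra. }
      pose proof (pos_INR k).
      assert (Cmod (L d) * (INR k + 1) <= 1).
      { apply Rle_trans with (/ (INR k + 1) * (INR k + 1)). apply Rmult_le_compat_r; lra.
        rewrite Rinv_l; lra. }
      nra.
    - unfold Cmod; apply sqrt_pos. }
  apply Cmod_eq0 in Hz.
  replace w with (fun n => vadd (d n) (const_seq V v n)) by (apply seq_ext; intro n; rewrite Hdw; auto).
  rewrite Ladd; auto. destruct (L d) as [a b]. cbn [Re Im] in Hz. destruct Hz as [-> ->].
  destruct (L (const_seq V v)) as [a b]. unfold Cadd; cbn [Re Im]. f_equal; ring.
  exists (vnorm v). intro; unfold const_seq; lra.
Qed.

End Final.

Theorem mainTheorem16 (V : CNormedSpace) :
  (forall A : V -> Prop, convex A -> (norm_closed A <-> sa_seq_closed A)) /\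
  (forall A : V -> Prop, linear_subspace A -> (norm_closed A <-> sa_seq_closed A)).
Proof.
  assert (H : forall A : V -> Prop, convex A -> (norm_closed A <-> sa_seq_closed A)).
  { intros A HA. split. apply closed_to_sa; auto. apply sa_to_closed. }
  split; auto. intros A [H0 [Hadd Hsc]]. apply H.
  intros x y t Hx Hy _. apply Hadd; apply Hsc; auto.
Qed.
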